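(* Let $\Gamma$ be a metrized graph that is a tree with $v$ vertices. Then $$W(\Gamma)=\frac{2v-1}{4}\,\ell(\Gamma)+ \frac{1}{8} \sum_{p, q \in V(\Gamma)} \mathrm{val}(p)\, \mathrm{val}(q)\, r(p,q).$$ In particular, if each edge length is equal to $1$, $$W(\Gamma)=\frac{(2v-1)(v-1)}{4}+ \frac{1}{8} \sum_{p, q \in V(\Gamma)} \mathrm{val}(p)\,\mathrm{val}(q)\, r(p,q).$$
   Context: A metrized graph is a finite connected graph each of whose edges is identified with a closed segment of positive length; its vertex set $V(\Gamma)$ is a finite nonempty set containing every point of valence $\neq 2$, and $v=\#V(\Gamma)$. $\mathrm{val}(p)$ is the valence of $p$ (number of directions emanating from $p$). $\ell(\Gamma)$ is the total length (sum of edge lengths). $r(p,q)$ is the effective resistance between $p$ and $q$ (edges as resistors with resistance equal to their lengths); on a tree it equals the path distance $d(p,q)$. The Wiener index is $W(\Gamma)=\frac12\sum_{p,q\in V(\Gamma)}d(p,q)$. *)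

(* Defs.v *)
From HB Require Import structures.
From mathcomp Require Import all_boot all_order all_algebra.
From mathcomp Require Import classical_sets reals.
Set Implicit Arguments. Unset Strict Implicit. Unset Printing Implicit Defensive.
Import Order.TTheory GRing.Theory Num.Theory.
Local Open Scope ring_scope.
Local Open Scope classical_set_scope.

(* A metrized graph whose vertex set V(Gamma) is the finite type T:
   adjacency  e : rel T  (one edge between adjacent vertices), and the
   length  len p q  of the edge joining p and q. *)

(* A (combinatorial) tree: symmetric, irreflexive, connected, and with
   exactly #|T| - 1 edges (counted here as 2(#|T|-1) ordered pairs). *)
Definition is_tree (T : finType) (e : rel T) : Prop :=
  [/\ symmetric e, irreflexive e,
      (forall p q : T, connect e p q) &
      #|[set x : T * T | e x.1 x.2]| = (#|T| - 1).*2]%N.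

Definition edge_lengths (R : realType) (T : finType) (e : rel T)
  (len : T -> T -> R) : Prop :=
  (forall p q, len p q = len q p) /\ (forall p q, e p q -> 0 < len p q).

Definition valence (T : finType) (e : rel T) (p : T) : nat := #|[set q | e p q]|.

(* total length l(Gamma): each edge counted once *)
Definition total_length (R : realType) (T : finType) (e : rel T)
  (len : T -> T -> R) : R :=
  (\sum_(x : T * T | e x.1 x.2) len x.1 x.2) / 2.

Fixpoint walk_length (R : realType) (T : finType) (len : T -> T -> R)
  (p : T) (s : seq T) : R :=
  if s is q :: s' then len p q + walk_length len q s' else 0.

Definition dist (R : realType) (T : finType) (e : rel T)
  (len : T -> T -> R) (p q : T) : R :=
  inf [set walk_length len p s | s in [set s | path e p s && (last p s == q)]].

Definition wiener (R : realType) (T : finType) (e : rel T)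
  (len : T -> T -> R) : R :=
  (\sum_(p : T) \sum_(q : T) dist e len p q) / 2.

(* Main.v *)
Require Import Defs.
From HB Require Import structures.
From mathcomp Require Import all_boot all_order all_algebra.
From mathcomp Require Import classical_sets reals.
From Stdlib Require Import Classical.
From mathcomp Require Import ring lra zify.
Import Order.TTheory GRing.Theory Num.Theory.
Local Open Scope ring_scope.

Section Dist.
Variables (R : realType) (T : finType) (e : rel T) (len : T -> T -> R).
Hypothesis esym : symmetric e.
Hypothesis lsym : forall p q, len p q = len q p.
Hypothesis lpos : forall p q, e p q -> 0 < len p q.
Hypothesis conn : forall p q : T, connect e p q.

Lemma wl_rcons p s q :
  walk_length len p (rcons s q) = walk_length len p s + len (last p s) q.
Proof.
elim: s p => [|x s IH] p /=; first by rewrite addr0 add0r.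
by rewrite IH addrA.
Qed.

Lemma wl_ge0 p s : path e p s -> 0 <= walk_length len p s.
Proof.
elim: s p => [|x s IH] p //= /andP[epx ps].
by rewrite addr_ge0 ?IH // ltW // lpos.
Qed.

Definition WS p q := [set walk_length len p s | s in [set s | path e p s && (last p s == q)]]%classic.

Lemma WS_ne p q : (WS p q !=set0)%classic.
Proof.
have /connectP[s ps ->] := conn p q.
by exists (walk_length len p s); exists s => //=; rewrite ps eqxx.
Qed.

Lemma WS_lb p q : lbound (WS p q) 0.
Proof. by move=> _ [s /= /andP[ps _] <-]; apply: wl_ge0. Qed.

Lemma WS_hlb p q : has_lbound (WS p q).
Proof. by exists 0; apply: WS_lb. Qed.

Lemma dist_ge0 p q : 0 <= dist e len p q.
Proof. exact: lb_le_inf (WS_ne p q) (WS_lb p q). Qed.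

Lemma dist_le p s : path e p s -> dist e len p (last p s) <= walk_length len p s.
Proof.
move=> ps; apply: (ge_inf (WS_hlb p (last p s))).
by exists s => //=; rewrite ps eqxx.
Qed.

Lemma dist_pp p : dist e len p p = 0.
Proof.
apply/eqP; rewrite eq_le dist_ge0 andbT.
by have := @dist_le p [::] isT.
Qed.

Lemma dist_tri p r q : e r q -> dist e len p q <= dist e len p r + len r q.
Proof.
move=> erq; rewrite -lerBlDr; apply: lb_le_inf; first exact: WS_ne.
move=> _ [s /= /andP[ps /eqP ls] <-].
rewrite lerBlDr -ls -wl_rcons.
have := @dist_le p (rcons s q); rewrite last_rcons; apply.
by rewrite rcons_path ps ls erq.
Qed.

Lemma walk_rev p s : path e p s -> exists t, [/\ path e (last p s) t,
  last (last p s) t = p & walk_length len (last p s) t = walk_length len p s].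
Proof.
elim: s p => [|x s IH] p /=; first by move=> _; exists [::].
move=> /andP[epx /IH[t [pt lt wt]]].
exists (rcons t p); rewrite rcons_path pt last_rcons wl_rcons lt wt.
split => //; first by rewrite esym epx.
by rewrite addrC lsym.
Qed.

Lemma dist_sym p q : dist e len p q = dist e len q p.
Proof.
suff H : forall a b, dist e len a b <= dist e len b a.
  by apply/eqP; rewrite eq_le !H.
move=> a b; apply: lb_le_inf; first exact: WS_ne.
move=> _ [s /= /andP[ps /eqP ls] <-].
have [t [pt lt wt]] := @walk_rev b s ps.
rewrite -wt; move: pt lt; rewrite ls => pt <-; exact: dist_le.
Qed.

Lemma dist_parent p q : q != p ->
  exists r, e r q /\ dist e len p r + len r q <= dist e len p q.
Proof.
move=> qp; apply: NNPP => Hn.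
have H : forall r, e r q -> dist e len p q < dist e len p r + len r q.
  move=> r erq; rewrite ltNge; apply/negP => Hle; apply: Hn; by exists r.
pose g r := dist e len p r + len r q - dist e len p q.
pose eps := \big[Order.min/1]_(r | e r q) g r.
have epos : 0 < eps.
  rewrite /eps; elim/big_ind: _ => //; first by move=> x y xp yp; rewrite lt_min xp.
  by move=> r erq; rewrite /g subr_gt0 H.
have epsle r : e r q -> eps <= g r.
  move=> erq; rewrite /eps (bigD1 r) //= ge_min lexx //.
have [_ [s /= /andP[ps /eqP ls] <-] hs] := inf_adherent epos (conj (WS_ne p q) (WS_hlb p q)).
move: ps ls hs; case/lastP: s => [|s x] /=; first by move=> _ pq; move: qp; rewrite -pq eqxx.
rewrite rcons_path last_rcons => /andP[ps ex] xq; subst x.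
rewrite wl_rcons => hs.
have := epsle _ ex; rewrite /g => he.
have := @dist_le p s ps => hd.
have : dist e len p q + eps <= walk_length len p s + len (last p s) q.
  rewrite -lerBrDl; apply: (le_trans he); rewrite lerD2r lerD2r //.
by rewrite leNgt hs.
Qed.

End Dist.
Section Count.
Variables (R : realType) (T : finType) (e : rel T) (len : T -> T -> R).
Hypothesis esym : symmetric e.
Hypothesis lsym : forall p q, len p q = len q p.
Hypothesis lpos : forall p q, e p q -> 0 < len p q.
Hypothesis cardEE : #|[set x : T * T | e x.1 x.2]| = (#|T| - 1).*2%N.
Variables (p : T) (D : T -> R).
Hypothesis D0 : 0 <= D p.
Hypothesis Dge : forall q, 0 <= D q.
Hypothesis Dp : D p = 0.
Hypothesis tri : forall r q, e r q -> D q <= D r + len r q.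
Hypothesis par : forall q, q != p -> exists r, e r q /\ D r + len r q <= D q.

Let E := [set x : T * T | e x.1 x.2].
Let P := [set x : T * T | e x.1 x.2 && (D x.2 == D x.1 + len x.1 x.2)].
Let sw (x : T * T) := (x.2, x.1).
Let Q := [set sw x | x in P].

Lemma sw_inj : injective sw.
Proof. by case=> a b [c d] [-> ->]. Qed.

Lemma PQ0 : [disjoint P & Q].
Proof.
rewrite -setI_eq0; apply/eqP/setP => -[a b]; rewrite !inE.
apply/negP => /andP[/andP[eab /eqP h1]] /imsetP[[c d]].
rewrite inE /= => /andP[_ /eqP h2] [ac bd]; subst c d.
have := lpos a b eab; move: h1 h2 => /= h1 h2; move: h1 h2; rewrite [len b a]lsym => -> h2.
move=> h4; lra.
Qed.

Lemma big_pairs (V : Type) (idx : V) (op : Monoid.com_law idx) (A : {set T * T}) (G : T * T -> V) :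
  \big[op/idx]_(x in A) G x = \big[op/idx]_q \big[op/idx]_(r | (r, q) \in A) G (r, q).
Proof.
rewrite (exchange_big_dep xpredT) //= (pair_big_dep xpredT (fun r q => (r, q) \in A) (fun r q => G (r, q))).
by apply: eq_big => -[].
Qed.

Lemma cardQ : #|Q| = #|P|.
Proof. exact: card_imset sw_inj. Qed.

Lemma QE x : (x \in Q) = (e x.1 x.2 && (D x.1 == D x.2 + len x.1 x.2)).
Proof.
case: x => a b; apply/imsetP/idP => [[[c d]] |].
  by rewrite inE /= => /andP[ecd Hd] [-> ->]; rewrite esym ecd lsym.
move=> /andP /= [eab Hd]; exists (b, a) => //; by rewrite inE /= esym eab lsym.
Qed.

Lemma PQsub : P :|: Q \subset E.
Proof.
apply/fintype.subsetP => x; rewrite !inE QE.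
by case/orP => /andP[].
Qed.

Let c q := #|[set r | (r, q) \in P]|.

Lemma cP : c p = 0%N.
Proof.
apply/eqP; rewrite cards_eq0; apply/eqP/setP => r; rewrite !inE /=.
apply/negP => /andP[erp /eqP h]; have := lpos r p erp; have := Dge r.
rewrite Dp in h; lra.
Qed.

Lemma cq q : q != p -> (1 <= c q)%N.
Proof.
move=> qp; have [r [erq h]] := par q qp; rewrite card_gt0; apply/set0Pn; exists r.
rewrite !inE /= erq /=; apply/eqP/le_anti; by rewrite h (tri r q erq).
Qed.

Lemma sumc : \sum_q c q = #|P|.
Proof.
rewrite -sum1_card big_pairs; apply: eq_bigr => q _; rewrite /c -sum1_card.
by apply: eq_bigl => r; rewrite inE.
Qed.

Lemma cardPQ : #|P :|: Q| = (#|P| + #|P|)%N.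
Proof.
have := cardsUI P Q; move: PQ0; rewrite -setI_eq0 => /eqP ->; rewrite cards0 addn0 cardQ.
by [].
Qed.

Lemma cardP_le : (#|P| <= #|T| - 1)%N.
Proof.
have := subset_leq_card PQsub; rewrite cardPQ /E cardEE -addnn.
lia.
Qed.

Lemma c1 : forall q, q != p -> c q = 1%N.
Proof.
have H := @leqif_sum T (fun q => q != p) (fun q => 1 == c q) (fun _ => 1%N) c.
have /H {}H : forall q, q != p -> (1 <= c q ?= iff (1 == c q))%N.
  by move=> q qp; apply: leqif_eq; apply: cq.
have s1 : (\sum_(q | q != p) 1 = #|T|.-1)%N.
  by rewrite -(cardC1 p) -sum1_card; apply: eq_bigl.
have s2 : (\sum_(q | q != p) c q = #|P|)%N.
  by rewrite -sumc [RHS](bigD1 p) //= cP.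
have : [forall (q | q != p), 1 == c q].
  have [Hle <-] := H; rewrite s1 s2 in Hle *; rewrite eqn_leq Hle /=.
  rewrite -subn1; exact: cardP_le.
by move/forall_inP => Hf q qp; apply/eqP; rewrite eq_sym; apply: Hf.
Qed.

Lemma cardP : #|P| = (#|T| - 1)%N.
Proof.
rewrite -sumc (bigD1 p) //= cP subn1 -(cardC1 p) -sum1_card.
by apply: eq_big => // q qp; rewrite c1.
Qed.

Lemma EPQ : E = P :|: Q.
Proof.
apply/eqP; rewrite eq_sym eqEcard PQsub cardPQ cardP /E cardEE -addnn.
by rewrite leqnn.
Qed.

Lemma sumE (f : T * T -> R) :
  \sum_(x | e x.1 x.2) f x = \sum_(x in P) f x + \sum_(x in P) f (sw x).
Proof.
rewrite (eq_bigl (fun x => x \in [predU P & Q])); last first.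
  move=> x; have -> : (x \in [predU P & Q]) = (x \in P :|: Q) by rewrite finset.in_setU inE.
  by rewrite -EPQ inE.
by rewrite bigU ?PQ0 // big_imset //; move=> x y _ _; apply: sw_inj.
Qed.

Lemma main_count :
  \sum_q (valence e q)%:R * D q = 2 * \sum_q D q - total_length e len.
Proof.
have h1 : \sum_q (valence e q)%:R * D q = \sum_(x | e x.1 x.2) D x.1.
  rewrite -(pair_big_dep xpredT (fun q r => e q r) (fun q _ => D q)) /=.
  apply: eq_bigr => q _; rewrite /valence -sum1_card natr_sum mulr_suml.
  apply: eq_big => [r|r _]; last by rewrite mul1r.
  by rewrite unfold_in /= boolp.asboolb.
have h2 : \sum_q D q = \sum_(x in P) D x.2.
  rewrite big_pairs; apply: eq_bigr => q _ /=.
  rewrite (eq_bigr (fun r => (1%N)%:R * D q)); last by move=> r _; rewrite mulr1n mul1r.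
  rewrite -mulr_suml -natr_sum sum1dep_card.
  change (D q = (c q)%:R * D q).
  have [->|qp] := eqVneq q p; first by rewrite Dp mulr0.
  by rewrite c1 // mul1r.
have h3 : \sum_(x in P) D x.2 = \sum_(x in P) D x.1 + \sum_(x in P) len x.1 x.2.
  rewrite -big_split /=; apply: eq_bigr => x; rewrite inE => /andP[_ /eqP] //.
have h4 : total_length e len = \sum_(x in P) len x.1 x.2.
  rewrite /total_length sumE.
  under [X in _ + X]eq_bigr do rewrite /sw /= lsym.
  set s := \sum_(x in P) _; lra.
rewrite h1 sumE h4 h2 h3 /sw /=; ring.
Qed.

End Count.
Theorem theorem4p3 (R : realType) (T : finType) (e : rel T)
    (len : T -> T -> R) :
  (0 < #|T|)%N -> is_tree e -> edge_lengths e len ->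
  wiener e len =
    ((2 * #|T|%:R - 1) / 4) * total_length e len
    + (\sum_(p : T) \sum_(q : T)
         (valence e p)%:R * (valence e q)%:R * dist e len p q) / 8
  /\
  ((forall p q, e p q -> len p q = 1) ->
   wiener e len =
    (2 * #|T|%:R - 1) * (#|T|%:R - 1) / 4
    + (\sum_(p : T) \sum_(q : T)
         (valence e p)%:R * (valence e q)%:R * dist e len p q) / 8).
Proof.
move=> n0 [esym eirr conn card0] [lsym lpos].
have cardEE : #|[set x : T * T | e x.1 x.2]%SET| = (#|T| - 1).*2%N.
  rewrite -card0; apply: eq_card => x; rewrite inE unfold_in /= boolp.asboolb.
  by [].
have key p : \sum_q (valence e q)%:R * dist e len p q =
    2 * \sum_q dist e len p q - total_length e len.
  apply: (@main_count R T e len esym lsym lpos cardEE p).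
  - exact: dist_ge0.
  - by move=> q; apply: dist_ge0.
  - by apply: dist_pp.
  - by move=> r q erq; apply: dist_tri.
  - by move=> q qp; apply: dist_parent.
have sval : \sum_p ((valence e p)%:R : R) = 2 * (#|T|%:R - 1).
  have -> : \sum_p ((valence e p)%:R : R) = (#|[set x : T * T | e x.1 x.2]%SET|)%:R.
    rewrite -natr_sum; congr (_%:R).
    rewrite -sum1dep_card -(pair_big_dep xpredT (fun p q => e p q) (fun _ _ => 1%N)) /=.
    apply: eq_big => // p _; rewrite /valence -sum1_card.
    apply: eq_big => // q; by rewrite unfold_in /= boolp.asboolb.
  rewrite cardEE -addnn natrD natrB //; ring.
set L := total_length e len.
set S := \sum_p \sum_q dist e len p q.
set n := (#|T|%:R : R).
have hS : \sum_p (valence e p)%:R * \sum_q dist e len p q = 2 * S - n * L.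
  transitivity (\sum_p \sum_q (valence e q)%:R * dist e len p q).
    rewrite exchange_big /=; apply: eq_bigr => p _; rewrite mulr_sumr.
    by apply: eq_bigr => q _; rewrite dist_sym.
  rewrite (eq_bigr _ (fun p _ => key p)) sumrB -mulr_sumr sumr_const.
  rewrite (_ : #|_| = #|T|); last by apply: eq_card.
  by rewrite /n -[_ *+ #|T|]mulr_natl.
have hX : \sum_(p : T) \sum_(q : T)
         (valence e p)%:R * (valence e q)%:R * dist e len p q = 4 * S - 2 * n * L - 2 * (n - 1) * L.
  transitivity (\sum_p (valence e p)%:R * (2 * \sum_q dist e len p q - L)).
    apply: eq_bigr => p _; rewrite -key mulr_sumr; apply: eq_bigr => q _; ring.
  rewrite (eq_bigr (fun p => 2 * ((valence e p)%:R * \sum_q dist e len p q) - (valence e p)%:R * L)); last first.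
    by move=> p _; ring.
  rewrite sumrB -mulr_sumr hS -mulr_suml sval; ring.
have hW : wiener e len = S / 2 by [].
have part1 : wiener e len = (2 * n - 1) / 4 * L + (\sum_(p : T) \sum_(q : T)
         (valence e p)%:R * (valence e q)%:R * dist e len p q) / 8.
  by rewrite hX hW; field.
split; first exact: part1.
move=> h1.
have hL : L = n - 1.
  rewrite /L /total_length (eq_bigr (fun _ => (1%N)%:R)); last first.
    by move=> x hx; rewrite h1 // mulr1n.
  rewrite -natr_sum sum1dep_card cardEE -addnn natrD natrB // /n; lra.
by rewrite part1 hL; field.
Qed.
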